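(* Let $H=(V,E,w)$ be a hypergraph and let $L,R\subset V$ be disjoint sets with $\mathrm{vol}(L\cup R)>0$. Then $$\gamma_1\le 2\beta_H(L,R),$$ where $\gamma_1=\min\{D(f): f\in\mathbb{R}^n,\ \sum_{v}\deg(v)f(v)^2>0\}$ and $D(f)=\frac{\sum_{e\in E}w(e)\big(\max_{u\in e}f(u)+\min_{v\in e}f(v)\big)^2}{\sum_{v\in V}\deg(v)f(v)^2}$.
   Context: A hypergraph $H=(V,E,w)$ has vertex set $V$ with $|V|=n$, hyperedges $E$ (subsets of $V$), weights $w:E\to\mathbb{R}_{>0}$; $\deg(v)=\sum_{e\ni v}w(e)$, $\mathrm{vol}(S)=\sum_{v\in S}\deg(v)$. For $A,B,C\subseteq V$, $w(A,B\mid C)=\sum_{e\in E}w(e)[e\cap A\ne\emptyset\wedge e\cap B\ne\emptyset\wedge e\cap C=\emptyset]$ and $w(A\mid C)=w(A,A\mid C)$. Writing $\overline{X}=V\setminus X$, the bipartiteness ratio of disjoint $L,R$ is $\beta_H(L,R)=\frac{2w(L\mid\overline{L})+2w(R\mid\overline{R})+w(L,\overline{L\cup R}\mid R)+w(R,\overline{L\cup R}\mid L)}{\mathrm{vol}(L\cup R)}$. The quantity $\gamma_1$ is the smallest eigenvalue of the paper's hypergraph operator $D_H^{-1}J_H$. *)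

(* Defs.v *)
From HB Require Import structures.
From mathcomp Require Import all_boot all_order all_algebra.
From mathcomp Require Import classical_sets reals.
Set Implicit Arguments. Unset Strict Implicit. Unset Printing Implicit Defensive.
Import Order.TTheory GRing.Theory Num.Theory.
Local Open Scope ring_scope.

Section Hypergraph.
Variables (R : realType) (V E : finType) (edge : E -> {set V}) (w : E -> R).

Definition hdeg (v : V) : R := \sum_(e : E | v \in edge e) w e.

Definition hvol (S : {set V}) : R := \sum_(v in S) hdeg v.

Definition wABC (A B C : {set V}) : R :=
  \sum_(e : E | [&& edge e :&: A != finset.set0, edge e :&: B != finset.set0 & edge e :&: C == finset.set0]) w e.

Definition wAC (A C : {set V}) : R := wABC A A C.

Definition beta_H (L Rs : {set V}) : R :=
  (2 * wAC L (~: L) + 2 * wAC Rs (~: Rs)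
   + wABC L (~: (L :|: Rs)) Rs + wABC Rs (~: (L :|: Rs)) L) / hvol (L :|: Rs).

(* max_{u in e} f(u) and min_{v in e} f(v) (meaningful for nonempty e; 0 otherwise) *)
Definition emax (f : V -> R) (e : E) : R :=
  if [pick u in edge e] is Some u0 then \big[Num.max/f u0]_(u in edge e) f u else 0.
Definition emin (f : V -> R) (e : E) : R :=
  if [pick u in edge e] is Some u0 then \big[Num.min/f u0]_(u in edge e) f u else 0.

Definition Dden (f : V -> R) : R := \sum_(v : V) hdeg v * f v ^+ 2.

Definition Dquot (f : V -> R) : R :=
  (\sum_(e : E) w e * (emax f e + emin f e) ^+ 2) / Dden f.

(* gamma_1 = min { D(f) : sum_v deg(v) f(v)^2 > 0 } (stated as the infimum,
   which coincides with the minimum, which is attained) *)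
Definition gamma1 : R :=
  inf [set Dquot f | f in [set f : V -> R | 0 < Dden f]]%classic.

End Hypergraph.

(* Main.v *)
Require Import Defs.
From HB Require Import structures.
From mathcomp Require Import all_boot all_order all_algebra.
From mathcomp Require Import classical_sets reals.
From mathcomp Require Import lra.
Import Order.TTheory GRing.Theory Num.Theory.
Local Open Scope ring_scope.

Section Aux.
Variables (R : realType) (V E : finType) (edge : E -> {set V}).

Lemma emax_spec (f : V -> R) e : edge e != finset.set0 ->
  (exists2 u, u \in edge e & emax edge f e = f u) /\
  (forall u, u \in edge e -> f u <= emax edge f e).
Proof.
move=> ne; rewrite /emax; case: pickP => [u0 u0e|h]; last first.
  by case/set0Pn: ne => x; rewrite h.
split.
  apply: (big_ind (fun x => exists2 u, u \in edge e & x = f u)).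
  - by exists u0.
  - move=> x y [a ha ->] [b hb ->]; case: (leP (f a) (f b)) => _;
      [by exists b | by exists a].
  - by move=> i hi; exists i.
move=> u ue; rewrite (bigD1 u) //=; by rewrite le_max lexx.
Qed.

Lemma emin_spec (f : V -> R) e : edge e != finset.set0 ->
  (exists2 u, u \in edge e & emin edge f e = f u) /\
  (forall u, u \in edge e -> emin edge f e <= f u).
Proof.
move=> ne; rewrite /emin; case: pickP => [u0 u0e|h]; last first.
  by case/set0Pn: ne => x; rewrite h.
split.
  apply: (big_ind (fun x => exists2 u, u \in edge e & x = f u)).
  - by exists u0.
  - move=> x y [a ha ->] [b hb ->]; case: (leP (f a) (f b)) => _;
      [by exists a | by exists b].
  - by move=> i hi; exists i.
move=> u ue; rewrite (bigD1 u) //=; by rewrite ge_min lexx.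
Qed.
End Aux.

Lemma wABC_sum (R : realType) (V E : finType) (edge : E -> {set V}) (w : E -> R) A B C :
  wABC edge w A B C = \sum_e w e * ([&& edge e :&: A != finset.set0, edge e :&: B != finset.set0 & edge e :&: C == finset.set0] : bool)%:R.
Proof.
rewrite /wABC big_mkcond; apply: eq_bigr => e _.
by case: ifP => _; rewrite ?mulr1 ?mulr0.
Qed.

Lemma compl_split (V : finType) (L Rs : {set V}) : [disjoint L & Rs] ->
  ~: L = Rs :|: ~: (L :|: Rs).
Proof.
move=> d; apply/setP => x; rewrite !inE.
case xL: (x \in L); case xR: (x \in Rs) => //=.
by rewrite (disjointFr d xL) in xR.
Qed.

Lemma eq0_split (V : finType) (S L Rs : {set V}) : [disjoint L & Rs] ->
  (S :&: ~: L == finset.set0) = (S :&: Rs == finset.set0) && (S :&: ~: (L :|: Rs) == finset.set0).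
Proof. by move=> d; rewrite (compl_split _ _ _ d) finset.setIUr finset.setU_eq0. Qed.

Theorem lemma13 (R : realType) (V E : finType) (edge : E -> {set V}) (w : E -> R)
  (hw : forall e, 0 < w e) (hne : forall e, edge e != finset.set0)
  (L Rs : {set V}) (hdisj : [disjoint L & Rs])
  (hvolpos : 0 < hvol edge w (L :|: Rs)) :
  gamma1 edge w <= 2 * beta_H edge w L Rs.
Proof.
pose f (v : V) : R := if v \in L then 1 else if v \in Rs then -1 else 0.
have dLR x : x \in L -> x \in Rs -> False.
  by move=> xL xR; rewrite (disjointFr hdisj xL) in xR.
have hden : Dden edge w f = hvol edge w (L :|: Rs).
  rewrite /Dden /hvol [RHS]big_mkcond; apply: eq_bigr => v _.
  rewrite /f !inE; case: (v \in L); case: (v \in Rs) => /=;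
    by rewrite ?expr2 ?mulrNN ?mulr1 ?mulr0.
have Dge0 g : 0 < Dden edge w g -> 0 <= Dquot edge w g.
  move=> hg; rewrite /Dquot divr_ge0 ?(ltW hg) //.
  by apply: sumr_ge0 => e _; rewrite mulr_ge0 ?sqr_ge0 ?(ltW (hw e)).
have hinf : gamma1 edge w <= Dquot edge w f.
  apply: ge_inf; last by exists f => //=; rewrite hden.
  by exists 0 => _ [g hg <-]; apply: Dge0.
apply: (le_trans hinf).
rewrite /Dquot /beta_H hden mulrA ler_pM2r ?invr_gt0 //.
rewrite /wAC !wABC_sum !mulr_sumr -!big_split /= mulr_sumr.
apply: ler_sum => e _.
have [[uM uMe ->] hM] := emax_spec _ _ _ _ f _ (hne e).
have [[um ume ->] hm] := emin_spec _ _ _ _ f _ (hne e).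
have hd2 : [disjoint Rs & L] by rewrite disjoint_sym.
rewrite (eq0_split _ _ _ _ hdisj) (eq0_split _ _ _ _ hd2) [Rs :|: L]finset.setUC.
have f1 u : u \in L -> f u = 1 by rewrite /f => ->.
have fm1 u : u \in Rs -> f u = -1 by move=> uR; rewrite /f uR; case: ifP => // uL; case: (dLR u uL uR).
have f0 u : u \notin L -> u \notin Rs -> f u = 0 by rewrite /f => /negPf -> /negPf ->.
have fle u : f u <= 1 by rewrite /f; case: ifP => _; [|case: ifP => _]; lra.
have fge u : -1 <= f u by rewrite /f; case: ifP => _; [|case: ifP => _]; lra.
have fnL u : u \notin L -> f u <= 0.
  by move=> uL; rewrite /f (negPf uL); case: ifP => _; lra.
have fnR u : u \notin Rs -> 0 <= f u.
  by move=> uR; rewrite /f (negPf uR); case: ifP => _; lra.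
have fLR1 u : u \in L :|: Rs -> u \notin L -> f u = -1.
  by rewrite inE => /orP[->//|uR] _; rewrite fm1.
have fLR2 u : u \in L :|: Rs -> u \notin Rs -> f u = 1.
  by rewrite inE => /orP[uL|->//] _; rewrite f1.
have nin (A : {set V}) x : edge e :&: A == finset.set0 -> x \in edge e -> x \in A -> False.
  move=> /eqP h xe xA; have: x \in edge e :&: A by rewrite inE xe xA.
  by rewrite h inE.
have ex (A : {set V}) : edge e :&: A != finset.set0 -> exists2 x, x \in edge e & x \in A.
  by case/set0Pn => x; rewrite inE => /andP[]; exists x.
have mM : f um <= f uM by apply: le_trans (hm _ uMe) (hM _ uMe).
have Mle := fle uM; have mge := fge um.
case ha: (edge e :&: L == finset.set0); case hb: (edge e :&: Rs == finset.set0);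
  case hc: (edge e :&: ~: (L :|: Rs) == finset.set0) => /=.
all: try (have [l le lL] := ex _ (negbT ha); have := hM _ le; rewrite (f1 l) // => hl).
all: try (have [r re rR] := ex _ (negbT hb); have := hm _ re; rewrite (fm1 r) // => hr).
all: try (have [o oe oO] := ex _ (negbT hc); move: oO; rewrite !inE negb_or => /andP[oL oR];
  have := hm _ oe; have := hM _ oe; rewrite (f0 o) // => ho1 ho2).
all: try (have uML : uM \notin L by apply/negP => /(nin _ _ ha uMe)).
all: try (have umL : um \notin L by apply/negP => /(nin _ _ ha ume)).
all: try (have uMR : uM \notin Rs by apply/negP => /(nin _ _ hb uMe)).
all: try (have umR : um \notin Rs by apply/negP => /(nin _ _ hb ume)).
all: try (have uMO : uM \in L :|: Rs by apply/negPn/negP => hO; apply: (nin _ _ hc uMe); rewrite inE).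
all: try (have umO : um \in L :|: Rs by apply/negPn/negP => hO; apply: (nin _ _ hc ume); rewrite inE).
all: rewrite ?mul1r ?mulr1 ?mulr0 ?addr0 ?add0r.
all: try (have := fnL _ uML); try (have := fnL _ umL); try (have := fnR _ uMR); try (have := fnR _ umR).
all: try (have := fLR1 _ uMO uML); try (have := fLR1 _ umO umL); try (have := fLR2 _ uMO uMR); try (have := fLR2 _ umO umR).
all: try (have := f0 _ uML uMR); try (have := f0 _ umL umR).
all: try (by move: uMO; rewrite inE (negPf uML) (negPf uMR)).
all: move=> *; have hw0 := hw e.
all: try apply/idP.
all: first [have eM : f uM = 1 by lra | have eM : f uM = 0 by lra | have eM : f uM = -1 by lra].
all: first [have em : f um = 1 by lra | have em : f um = 0 by lra | have em : f um = -1 by lra].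
all: rewrite eM em expr2; nra.
Qed.
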